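(* Let $n\ge 1$. The set $\mathcal{DM}(n)$ of all disjoint multilinear interaction expressions in the $n$ variables $x_1,\dots,x_n$ is in one-to-one correspondence with the set $\mathfrak{G}(n)$ of equivalence classes of feature graphs on $n$ nodes under the reachability relation $\sim$; that is, there is a bijection $\mathcal{DM}(n)\to\mathfrak{G}(n)$.
   Context: A predictive model $y(\vec x)$ is a disjoint multilinear interaction expression (DMIE) if it can be written as $y(\vec{x}) = \sum_{i=1}^{k} \prod_{j=1}^{m_i} x_{i_j}$, where $x_{i_j}$ and $x_{k_l}$ are distinct variables whenever $i\neq k$ or $j\neq l$ (each variable occurs in at most one product, at most once). $\mathcal{DM}(n)$ denotes the set of all DMIE expressions of the $n$ variables $x_1,\dots,x_n$ (expressions are regarded as polynomial functions, so reordering factors or summands gives the same expression). A feature graph on $n$ nodes is a simple undirected graph with node set $N_n=\{1,\dots,n\}$, node $i$ corresponding to variable $x_i$; $\mathcal{G}(n)$ is the set of all such graphs. For $G_1,G_2\in\mathcal{G}(n)$, $G_1\sim G_2$ if for all $i,j\in N_n$, $i$ and $j$ are reachable from each other (connected by a path, a node being reachable from itself) in $G_1$ if and only if they are reachable in $G_2$. This is an equivalence relation, and $\mathfrak{G}(n)=\{[G]_\sim : G\in\mathcal{G}(n)\}$. *)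

(* Defs.v *)
From mathcomp Require Import all_boot all_order all_algebra.
From mathcomp Require Import reals.
Set Implicit Arguments. Unset Strict Implicit. Unset Printing Implicit Defensive.
Import Order.TTheory GRing.Theory Num.Theory.
Local Open Scope ring_scope.

(* A disjoint multilinear interaction expression in x_1..x_n, regarded as a
   polynomial function R^n -> R: it is determined by a family P of pairwise
   disjoint, nonempty sets of variable indices covering all n variables
   (a partition of 'I_n), and equals  x |-> \sum_(B in P) \prod_(i in B) x_i. *)
Definition dmie_of (R : realType) (n : nat) (P : {set {set 'I_n}})
  : ('I_n -> R) -> R :=
  fun x => \sum_(B in P) \prod_(i in B) x i.

Definition DM (R : realType) (n : nat) : (('I_n -> R) -> R) -> Prop :=
  fun f => exists P : {set {set 'I_n}},
      partition P [set: 'I_n] /\ f = @dmie_of R n P.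

Record feature_graph (n : nat) := FeatureGraph {
  fg_edge : rel 'I_n;
  fg_sym : symmetric fg_edge;
  fg_irr : irreflexive fg_edge }.

Definition reachable (n : nat) (G : feature_graph n) (i j : 'I_n) : bool :=
  connect (fg_edge G) i j.

Definition graph_equiv (n : nat) (G1 G2 : feature_graph n) : Prop :=
  forall i j : 'I_n, reachable G1 i j <-> reachable G2 i j.

Definition graph_class (n : nat) (G : feature_graph n) : feature_graph n -> Prop :=
  fun H => graph_equiv H G.

Definition Gfrak (n : nat) : (feature_graph n -> Prop) -> Prop :=
  fun C => exists G : feature_graph n, C = graph_class G.

(* Main.v *)
Require Import Defs.
From mathcomp Require Import all_boot all_order all_algebra.
From mathcomp Require Import reals.
From Stdlib Require Import ClassicalEpsilon FunctionalExtensionality PropExtensionality ProofIrrelevance.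
Set Implicit Arguments. Unset Strict Implicit. Unset Printing Implicit Defensive.
Import Order.TTheory GRing.Theory Num.Theory.
Local Open Scope ring_scope.

Section Dm.
Variable R : realType.
Variable n : nat.
Implicit Types P Q : {set {set 'I_n}}.

Definition ind (S : {set 'I_n}) : 'I_n -> R := fun i => (i \in S)%:R.
Definition hasB P (S : {set 'I_n}) := [exists B in P, B \subset S].

Lemma prod_ind (B S : {set 'I_n}) :
  \prod_(i in B) ind S i = (B \subset S)%:R.
Proof.
case: (boolP (B \subset S)) => h.
  by apply: big1 => i iB; rewrite /ind (subsetP h i iB).
case/subsetPn: h => i iB niS.
by rewrite (bigD1 i) //= /ind (negbTE niS) mul0r.
Qed.

Lemma dmie_ind P S : (dmie_of P (ind S) == 0) = ~~ hasB P S.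
Proof.
rewrite /dmie_of; under eq_bigr => B _ do rewrite prod_ind.
apply/idP/idP.
  move/eqP => h; apply/negP => /existsP [B /andP [BP BS]].
  have nn : forall B, B \in P -> 0 <= ((B \subset S)%:R : R).
    by move=> B' _; case: (B' \subset S); rewrite ?ler01 ?lexx.
  have := psumr_eq0P nn h BP.
  by rewrite BS => /eqP; rewrite oner_eq0.
move=> nh; apply/eqP; apply: big1 => B BP.
case BS: (B \subset S) => //.
by case/negP: nh; apply/existsP; exists B; rewrite BP.
Qed.

Lemma charP P B : partition P [set: 'I_n] ->
  (B \in P) = hasB P B && [forall S : {set 'I_n}, (S \proper B) ==> ~~ hasB P S].
Proof.
case/and3P => /eqP cov triv n0.
apply/idP/idP.
  move=> BP; apply/andP; split; first by apply/existsP; exists B; rewrite BP subxx.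
  apply/forallP => S; apply/implyP => SB; apply/negP => /existsP [B' /andP [B'P B'S]].
  have B'n0 : B' != set0 by apply: contraNneq n0 => <-.
  case/set0Pn: B'n0 => x xB'.
  have xB : x \in B by move: SB => /proper_sub /subsetP; apply; apply: (subsetP B'S).
  have eB : B' = B by rewrite -(def_pblock triv B'P xB') (def_pblock triv BP xB).
  by rewrite -eB in SB; move: (sub_proper_trans B'S SB); rewrite properxx.
move=> /andP [/existsP [B' /andP [B'P B'B]] /forallP hS].
case: (boolP (B' \proper B)) => pr.
  by move: (hS B'); rewrite pr /= => /negP []; apply/existsP; exists B'; rewrite B'P subxx.
suff -> : B = B' by [].
by apply/eqP; move: pr; rewrite properEneq B'B andbT negbK eq_sym.
Qed.

Lemma dmie_inj P Q : partition P [set: 'I_n] -> partition Q [set: 'I_n] ->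
  dmie_of (R:=R) P = dmie_of Q -> P = Q.
Proof.
move=> pP pQ e; apply/setP => B.
have hh : forall S, hasB P S = hasB Q S.
  by move=> S; apply: negb_inj; rewrite -!dmie_ind e.
rewrite (charP B pP) (charP B pQ) hh; congr (_ && _).
by apply: eq_forallb => S; rewrite hh.
Qed.
End Dm.

Section Gr.
Variable n : nat.
Implicit Types P Q : {set {set 'I_n}}.

Definition gedge P : rel 'I_n := fun i j => (i != j) && (pblock P i == pblock P j).
Lemma gedge_sym P : symmetric (gedge P).
Proof. by move=> i j; rewrite /gedge eq_sym (eq_sym (pblock P i)). Qed.
Lemma gedge_irr P : irreflexive (gedge P).
Proof. by move=> i; rewrite /gedge eqxx. Qed.
Definition gP P : feature_graph n := @FeatureGraph n (gedge P) (gedge_sym P) (gedge_irr P).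

Lemma reach_gP P i j : reachable (gP P) i j = (pblock P i == pblock P j).
Proof.
apply/idP/idP.
  case/connectP => p pth ->.
  elim: p i pth => [|k p IH] i /=; first by rewrite eqxx.
  by case/andP => /andP [_ /eqP ->] /IH.
move=> e; case: (eqVneq i j) => [->|ne]; first exact: connect0.
by apply: connect1; rewrite /= /gedge ne e.
Qed.

Lemma part_sub P Q : partition P [set: 'I_n] -> partition Q [set: 'I_n] ->
  (forall i j, (pblock P i == pblock P j) = (pblock Q i == pblock Q j)) ->
  forall B, B \in P -> B \in Q.
Proof.
case/and3P => /eqP cP tP nP; case/and3P => /eqP cQ tQ nQ h B BP.
have : B != set0 by apply: contraNneq nP => <-.
case/set0Pn => i iB.
have ciP : i \in cover P by rewrite cP in_setT.
have ciQ : i \in cover Q by rewrite cQ in_setT.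
have -> : B = pblock Q i.
  rewrite -(def_pblock tP BP iB); apply/setP => j.
  by rewrite -(eq_pblock _ tP ciP) -(eq_pblock _ tQ ciQ) h.
exact: pblock_mem.
Qed.

Lemma part_eq P Q : partition P [set: 'I_n] -> partition Q [set: 'I_n] ->
  (forall i j, (pblock P i == pblock P j) = (pblock Q i == pblock Q j)) -> P = Q.
Proof.
move=> pP pQ h; apply/setP => B; apply/idP/idP; first exact: part_sub.
by apply: part_sub => // i j; rewrite h.
Qed.

Definition compP (G : feature_graph n) : {set {set 'I_n}} :=
  equivalence_partition (connect (fg_edge G)) [set: 'I_n].

Lemma comp_equiv (G : feature_graph n) :
  {in [set: 'I_n] & &, equivalence_rel (connect (fg_edge G))}.
Proof.
have cs := sym_connect_sym (fg_sym G).
move=> x y z _ _ _; split; first exact: connect0.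
move=> cxy; apply/idP/idP => h.
  by apply: connect_trans h; rewrite cs.
exact: connect_trans cxy h.
Qed.

Lemma compP_part G : partition (compP G) [set: 'I_n].
Proof. exact: equivalence_partitionP (comp_equiv G). Qed.

Lemma compP_pblock G i j :
  (pblock (compP G) i == pblock (compP G) j) = reachable G i j.
Proof.
case/and3P: (compP_part G) => /eqP c t _.
have ci : i \in cover (compP G) by rewrite c in_setT.
rewrite (eq_pblock _ t ci).
by rewrite (pblock_equivalence_partition (comp_equiv G)) ?in_setT.
Qed.
End Gr.

Definition pick_part (R : realType) n (p : ('I_n -> R) -> R) (h : DM p) :=
  proj1_sig (constructive_indefinite_description _ h).

Lemma pick_partP (R : realType) n (p : ('I_n -> R) -> R) (h : DM p) :
  partition (pick_part h) [set: 'I_n] /\ p = dmie_of (pick_part h).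
Proof. exact: (proj2_sig (constructive_indefinite_description _ h)). Qed.

Lemma sig_eq n (C1 C2 : feature_graph n -> Prop) (h1 : Gfrak C1) (h2 : Gfrak C2) :
  C1 = C2 -> exist (@Gfrak n) C1 h1 = exist (@Gfrak n) C2 h2.
Proof. move=> e; subst C2; congr exist; exact: proof_irrelevance. Qed.

Theorem theorem1 (R : realType) (n : nat) (hn : (0 < n)%N) :
  exists f : {p : ('I_n -> R) -> R | @DM R n p} -> {C | @Gfrak n C},
    bijective f.
Proof.
pose f (x : {p : ('I_n -> R) -> R | @DM R n p}) : {C | @Gfrak n C} :=
  exist (@Gfrak n) (graph_class (gP (pick_part (proj2_sig x)))) (ex_intro _ _ erefl).
have inj : injective f.
  move=> [p1 h1] [p2 h2] /(congr1 (@proj1_sig _ _)) /= e.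
  have ge : graph_equiv (gP (pick_part h1)) (gP (pick_part h2)).
    by rewrite -[graph_equiv _ _]/(graph_class _ _) -e.
  case: (pick_partP h1) => pa1 d1; case: (pick_partP h2) => pa2 d2.
  have ep : pick_part h1 = pick_part h2.
    apply: part_eq => // i j.
    rewrite -(reach_gP (pick_part h1)) -(reach_gP (pick_part h2)).
    by case: (ge i j) => a b; apply/idP/idP; [exact: a | exact: b].
  have ep' : p1 = p2 by rewrite d1 d2 ep.
  subst p2; congr exist; exact: proof_irrelevance.
have surj : forall y, exists x, f x = y.
  move=> [C hC]; case: (hC) => G eC.
  have hP : DM (dmie_of (R:=R) (compP G)) by exists (compP G); split => //; exact: compP_part.
  exists (exist _ _ hP).
  have e : graph_class (gP (pick_part hP)) = graph_class G.
    case: (pick_partP hP) => pa d.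
    have -> : pick_part hP = compP G by apply: (dmie_inj pa (compP_part G)); exact: (esym d).
    apply: functional_extensionality => H; apply: propositional_extensionality.
    rewrite /graph_class /graph_equiv; split => h i j; rewrite h reach_gP compP_pblock //.
  apply: sig_eq; rewrite /= e; exact/esym.
pose g y := proj1_sig (constructive_indefinite_description _ (surj y)).
have gK : cancel g f by move=> y; exact: (proj2_sig (constructive_indefinite_description _ (surj y))).
exists f, g => //.
by move=> x; apply: inj; rewrite gK.
Qed.
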